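(* Let $g\ge2$, $\sigma\in\mathrm{Spin}(\Sigma_g)$ and $B$ a symplectic basis of $H_1(\Sigma_g;\mathbb{Z}/2)$. The $\mathbb{Z}/8$-submodule of $\mathrm{Map}(H_1(\Sigma_g;\mathbb{Z}/2),\mathbb{Z}/8)$ spanned by the functions $\overline{C}$, $C\in H_1(\Sigma_g;\mathbb{Z}/2)$ (which is the image of Sato's homomorphism $\beta_\sigma$) equals the internal direct sum $$\bigoplus_{X\in B}\mathbb{Z}/8\cdot\overline{X}\ \oplus\bigoplus_{\{X,Y\}\subset B}\mathbb{Z}/8\cdot 2\overline{X}\,\overline{Y}\ \oplus\bigoplus_{\{X,Y,Z\}\subset B}\mathbb{Z}/8\cdot4\overline{X}\,\overline{Y}\,\overline{Z}\ \cong(\mathbb{Z}/8)^{2g}\oplus(\mathbb{Z}/4)^{\binom{2g}{2}}\oplus(\mathbb{Z}/2)^{\binom{2g}{3}},$$ the sums running over subsets of distinct elements of $B$.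
   Context: $\Sigma_g$ is a closed oriented genus $g$ surface. To $\sigma\in\mathrm{Spin}(\Sigma_g)$ is associated (Johnson) a quadratic form $q_\sigma:H_1(\Sigma_g;\mathbb{Z}/2)\to\mathbb{Z}/2$, $q_\sigma(y+z)=q_\sigma(y)+q_\sigma(z)+y\cdot z$. For $z\in H_1(\Sigma_g;\mathbb{Z}/2)$, $i_z(y)=1\in\mathbb{Z}/8$ if $z\cdot y\equiv1\pmod2$ and $0$ otherwise. $\overline{C}:=(-1)^{q_\sigma(C)}i_C\in\mathrm{Map}(H_1(\Sigma_g;\mathbb{Z}/2),\mathbb{Z}/8)$, a $\mathbb{Z}/8$-algebra under pointwise operations. Sato's homomorphism $\beta_\sigma:\mathrm{Mod}_{g,1}[2]\to\mathrm{Map}(H_1(\Sigma_g;\mathbb{Z}/2),\mathbb{Z}/8)$ satisfies $\beta_\sigma(t_c^2)=\overline{[c]}$ for non-separating simple closed curves $c$, and $\mathrm{Mod}_{g,1}[2]$ (the level 2 subgroup of the mapping class group of $\Sigma_g$ rel a disc) is generated by such squares. A symplectic basis satisfies $A_i\cdot B_j=\delta_{ij}$, $A_i\cdot A_j=B_i\cdot B_j=0$. *)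

(* Defs.v *)
From HB Require Import structures.
From mathcomp Require Import all_boot all_order all_algebra.
Set Implicit Arguments. Unset Strict Implicit. Unset Printing Implicit Defensive.
Import Order.TTheory GRing.Theory Num.Theory.
Local Open Scope ring_scope.

(* H_1(Sigma_g; Z/2) modelled as (F_2)^(g+g); coordinates 0..g-1 and g..2g-1
   with the standard (symplectic) intersection form. *)
Definition H1 (g : nat) := 'rV['F_2]_(g + g).

Definition iform (g : nat) (x y : H1 g) : 'F_2 :=
  \sum_(i < g) (x 0 (lshift g i) * y 0 (rshift g i)
              + x 0 (rshift g i) * y 0 (lshift g i)).

(* Johnson: spin structures <-> quadratic refinements of the intersection form. *)
Definition quad_form (g : nat) (q : H1 g -> 'F_2) : Prop :=
  forall y z : H1 g, q (y + z) = q y + q z + iform y z.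

(* A symplectic basis indexed by 'I_(g+g): e (lshift i) = A_i, e (rshift i) = B_i. *)
Definition symplectic_basis (g : nat) (e : 'I_(g + g) -> H1 g) : Prop :=
  (forall i j : 'I_g, iform (e (lshift g i)) (e (rshift g j)) = (i == j)%:R) /\
  (forall i j : 'I_g, iform (e (lshift g i)) (e (lshift g j)) = 0) /\
  (forall i j : 'I_g, iform (e (rshift g i)) (e (rshift g j)) = 0).

Definition Map (g : nat) := H1 g -> 'Z_8.

Definition i_fun (g : nat) (z : H1 g) : Map g :=
  fun y => if iform z y == 1 then 1 else 0.

Definition Cbar (g : nat) (q : H1 g -> 'F_2) (C : H1 g) : Map g :=
  fun y => (if q C == 1 then -1 else 1) * i_fun C y.

Definition span_Cbar (g : nat) (q : H1 g -> 'F_2) (f : Map g) : Prop :=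
  exists a : H1 g -> 'Z_8, forall y, f y = \sum_(C : H1 g) a C * Cbar q C y.

Definition gen1 (g : nat) q (e : 'I_(g+g) -> H1 g) (i : 'I_(g+g)) : Map g :=
  fun y => Cbar q (e i) y.
Definition gen2 (g : nat) q (e : 'I_(g+g) -> H1 g) (i j : 'I_(g+g)) : Map g :=
  fun y => 2%:R * (Cbar q (e i) y * Cbar q (e j) y).
Definition gen3 (g : nat) q (e : 'I_(g+g) -> H1 g) (i j k : 'I_(g+g)) : Map g :=
  fun y => 4%:R * (Cbar q (e i) y * Cbar q (e j) y * Cbar q (e k) y).

Definition combo (g : nat) q (e : 'I_(g+g) -> H1 g)
  (a : 'I_(g+g) -> 'Z_8) (b : 'I_(g+g) -> 'I_(g+g) -> 'Z_8)
  (c : 'I_(g+g) -> 'I_(g+g) -> 'I_(g+g) -> 'Z_8) : Map g :=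
  fun y => \sum_(i : 'I_(g+g)) a i * gen1 q e i y
         + \sum_(i : 'I_(g+g)) \sum_(j : 'I_(g+g) | (i < j)%N) b i j * gen2 q e i j y
         + \sum_(i : 'I_(g+g)) \sum_(j : 'I_(g+g) | (i < j)%N) \sum_(k : 'I_(g+g) | (j < k)%N) c i j k * gen3 q e i j k y.

Definition has_order (g : nat) (v : Map g) (m : nat) : Prop :=
  forall n : nat, (forall y, v y *+ n = 0) <-> (m %| n)%N.

(* Main.v *)
Require Import Defs.
From mathcomp Require Import all_boot all_order all_algebra.
From mathcomp Require Import ring zify.
Import GRing.Theory.
Local Open Scope ring_scope.
Set Implicit Arguments. Unset Strict Implicit.

Lemma S2S (R : nmodType) n (F : nat -> nat -> R) :
  \sum_(i < n.+1) \sum_(j < n.+1 | (i < j)%N) F i j =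
  \sum_(i < n) \sum_(j < n | (i < j)%N) F i j + \sum_(i < n) F i n.
Proof.
rewrite big_ord_recr /= [X in _ + X]big1 ?addr0; last first.
  by move=> j hj; have := ltn_ord j; lia.
rewrite -big_split /=; apply: eq_bigr => i _.
by rewrite big_mkcond big_ord_recr /= ltn_ord -big_mkcond.
Qed.

Lemma S3S (R : nmodType) n (F : nat -> nat -> nat -> R) :
  \sum_(i < n.+1) \sum_(j < n.+1 | (i < j)%N) \sum_(k < n.+1 | (j < k)%N) F i j k =
  \sum_(i < n) \sum_(j < n | (i < j)%N) \sum_(k < n | (j < k)%N) F i j k
  + \sum_(i < n) \sum_(j < n | (i < j)%N) F i j n.
Proof.
rewrite (@S2S _ n (fun i j => \sum_(k < n.+1 | (j < k)%N) F i j k)).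
rewrite [X in _ + X]big1 ?addr0; last first.
  move=> i _; apply: big1 => k hk; have := ltn_ord k; lia.
rewrite -big_split /=; apply: eq_bigr => i _.
rewrite -big_split /=; apply: eq_bigr => j _.
by rewrite big_mkcond big_ord_recr /= ltn_ord -big_mkcond.
Qed.

Definition P1 n (X : nat -> 'Z_8) := \sum_(i < n) X i.
Definition P2 n (X : nat -> 'Z_8) := \sum_(i < n) \sum_(j < n | (i < j)%N) X i * X j.
Definition P3 n (X : nat -> 'Z_8) :=
  \sum_(i < n) \sum_(j < n | (i < j)%N) \sum_(k < n | (j < k)%N) X i * X j * X k.

Lemma Z8_8 : (8%:R : 'Z_8) = 0. Proof. by apply/val_inj. Qed.

Lemma parity_all n (b : nat -> bool) :
  let X i := ((b i)%:R : 'Z_8) in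
  let par := ((odd (\sum_(i < n) b i))%:R : 'Z_8) in
  [/\ 4%:R * P1 n X = 4%:R * par,
      2%:R * (P1 n X - 2%:R * P2 n X) = 2%:R * par &
      P1 n X - 2%:R * P2 n X + 4%:R * P3 n X = par].
Proof.
move=> X; elim: n => [|n [IHc IHa IHb]] par.
  by rewrite /par /P1 /P2 /P3 !big_ord0 /=; split; ring.
have eP1 : P1 n.+1 X = P1 n X + X n by rewrite /P1 big_ord_recr.
have eP2 : P2 n.+1 X = P2 n X + P1 n X * X n.
  by rewrite /P2 (@S2S _ n (fun i j => X i * X j)) /P1 mulr_suml.
have eP3 : P3 n.+1 X = P3 n X + P2 n X * X n.
  rewrite /P3 (@S3S _ n (fun i j k => X i * X j * X k)) /P2 !mulr_suml.
  by apply: congr1; apply: eq_bigr => i _; rewrite mulr_suml.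
rewrite /par big_ord_recr /= oddD eP1 eP2 eP3.
have hXn : X n = (b n)%:R := erefl.
rewrite hXn; move: IHc IHa IHb.
set p1 := P1 n X; set p2 := P2 n X; set p3 := P3 n X.
case: (b n); case: (odd _) => /= hc ha hb; rewrite ?mulr1 ?mulr0 ?addr0 //.
- split.
  + by rewrite mulrDr hc -mulrDr; apply/val_inj.
  + have -> : 2%:R * (p1 + 1 - 2%:R * (p2 + p1)) =
      2%:R * (p1 - 2%:R * p2) + 2%:R - 4%:R * p1 by ring.
    by rewrite ha hc; apply/val_inj.
  + have -> : p1 + 1 - 2%:R * (p2 + p1) + 4%:R * (p3 + p2) =
      (p1 - 2%:R * p2 + 4%:R * p3) + 1 - 2%:R * (p1 - 2%:R * p2) by ring.
    by rewrite hb ha; apply/val_inj.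
- split.
  + by rewrite mulrDr hc -mulrDr; apply/val_inj.
  + have -> : 2%:R * (p1 + 1 - 2%:R * (p2 + p1)) =
      2%:R * (p1 - 2%:R * p2) + 2%:R - 4%:R * p1 by ring.
    by rewrite ha hc; apply/val_inj.
  + have -> : p1 + 1 - 2%:R * (p2 + p1) + 4%:R * (p3 + p2) =
      (p1 - 2%:R * p2 + 4%:R * p3) + 1 - 2%:R * (p1 - 2%:R * p2) by ring.
    by rewrite hb ha; apply/val_inj.
all: by rewrite ?mulr1 ?mulr0 in hc ha hb; split.
Qed.

Lemma F2_cases (u : 'F_2) : u = 0 \/ u = 1.
Proof. case: u => [[|[|?]] ?] //; [left|right]; by apply/val_inj. Qed.

Lemma iformC g (x y : H1 g) : iform x y = iform y x.
Proof. by rewrite /iform; apply: eq_bigr => i _; ring. Qed.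

Lemma iformDl g (x y z : H1 g) : iform (x + y) z = iform x z + iform y z.
Proof. by rewrite /iform -big_split; apply: eq_bigr => i _ /=; rewrite !mxE; ring. Qed.

Lemma iformZl g a (x z : H1 g) : iform (a *: x) z = a * iform x z.
Proof. by rewrite /iform mulr_sumr; apply: eq_bigr => i _; rewrite !mxE; ring. Qed.

Lemma iform0l g (z : H1 g) : iform 0 z = 0.
Proof. by rewrite /iform big1 // => i _; rewrite !mxE; ring. Qed.

Lemma iform_suml g I (r : seq I) (F : I -> H1 g) z :
  iform (\sum_(i <- r) F i) z = \sum_(i <- r) iform (F i) z.
Proof.
elim: r => [|h r IH]; rewrite ?big_nil ?big_cons ?iform0l //.
by rewrite iformDl IH.
Qed.

Definition dual g (k : 'I_(g + g)) : 'I_(g + g) :=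
  match split k with inl i => rshift g i | inr i => lshift g i end.
Arguments dual {g}.

Lemma dual_l g (i : 'I_g) : dual (lshift g i) = rshift g i.
Proof. by rewrite /dual (unsplitK (inl _ i)). Qed.
Lemma dual_r g (i : 'I_g) : dual (rshift g i) = lshift g i.
Proof. by rewrite /dual (unsplitK (inr _ i)). Qed.

Lemma ordLR g (k : 'I_(g + g)) : (exists i, k = lshift g i) \/ (exists i, k = rshift g i).
Proof. have := splitK k; case: (split k) => i <-; [left|right]; by exists i. Qed.

Lemma dual_dual g (k : 'I_(g + g)) : dual (dual k) = k.
Proof. by have [[i ->]|[i ->]] := ordLR k; rewrite ?dual_l ?dual_r ?dual_l. Qed.

Lemma iform_e g (e : 'I_(g + g) -> H1 g) : symplectic_basis e ->
  forall k j, iform (e k) (e j) = (k == dual j)%:R.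
Proof.
move=> [h1 [h2 h3]] k j.
have [[i ->]|[i ->]] := ordLR k; have [[l ->]|[l ->]] := ordLR j;
  rewrite ?dual_l ?dual_r ?eq_lrshift ?eq_rlshift ?h2 ?h3 ?h1 //.
by rewrite iformC h1 (inj_eq (@rshift_inj _ _)) eq_sym.
Qed.

Definition lin g (e : 'I_(g + g) -> H1 g) (s : H1 g) : H1 g :=
  \sum_k s 0 k *: e k.
Arguments lin {g}.

Lemma iform_lin_e g (e : 'I_(g + g) -> H1 g) : symplectic_basis e ->
  forall s j, iform (lin e s) (e j) = s 0 (dual j).
Proof.
move=> he s j; rewrite iform_suml.
under eq_bigr do rewrite iformZl (iform_e he).
rewrite (bigD1 (dual j)) //= eqxx mulr1 big1 ?addr0 // => k /negbTE ->.
by rewrite mulr0.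
Qed.

Lemma lin_surj g (e : 'I_(g + g) -> H1 g) : symplectic_basis e ->
  forall C, exists s, C = lin e s.
Proof.
move=> he C.
have inj : injective (lin e).
  move=> s t hst; apply/rowP => k.
  have := congr1 (fun v => iform v (e (dual k))) hst.
  by rewrite /= !(iform_lin_e he) dual_dual => ->.
have [h hK Kh] := injF_bij inj.
by exists (h C); rewrite Kh.
Qed.

Lemma pattern g (e : 'I_(g + g) -> H1 g) : symplectic_basis e ->
  forall t : 'I_(g + g) -> 'F_2, exists y, forall k, iform (e k) y = t k.
Proof.
move=> he t; exists (lin e (\row_k t (dual k))) => k.
by rewrite iformC (iform_lin_e he) mxE dual_dual.
Qed.

Definition ind (u : 'F_2) : 'Z_8 := if u == 1 then 1 else 0.
Definition eps g (q : H1 g -> 'F_2) C : 'Z_8 := if q C == 1 then -1 else 1.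

Lemma eps2 g (q : H1 g -> 'F_2) C : eps q C * eps q C = 1.
Proof. by rewrite /eps; case: ifP => _; rewrite ?mulrNN mulr1. Qed.

Lemma ind_add2 (u v : 'F_2) : ind (u + v) = ind u + ind v - 2%:R * (ind u * ind v).
Proof. by case: (F2_cases u) => ->; case: (F2_cases v) => ->; apply/val_inj. Qed.

Lemma ind_add3 (u v w : 'F_2) : ind (u + v + w) = ind u + ind v + ind w
  - 2%:R * (ind u * ind v + ind u * ind w + ind v * ind w) + 4%:R * (ind u * ind v * ind w).
Proof.
by case: (F2_cases u) => ->; case: (F2_cases v) => ->; case: (F2_cases w) => ->;
  apply/val_inj.
Qed.

Lemma ind_nat m : ind (m%:R) = (odd m)%:R.
Proof.
elim: m => [|m IH]; first by apply/val_inj.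
rewrite mulrSr ind_add2 IH /=.
by case: (odd m); apply/val_inj.
Qed.

Lemma F2_bool (u : 'F_2) : u = (u == 1)%:R.
Proof. by case: (F2_cases u) => ->. Qed.

Lemma ind_sum n (u : 'I_n -> 'F_2) :
  ind (\sum_k u k) = (odd (\sum_k (u k == 1%R : nat)))%:R.
Proof.
rewrite -ind_nat natr_sum; congr ind; apply: eq_bigr => k _.
by rewrite {1}[u k]F2_bool.
Qed.

Lemma parity_ord n (bk : 'I_n -> bool) :
  ((odd (\sum_k (bk k : nat)))%:R : 'Z_8) =
  \sum_k (bk k)%:R - 2%:R * \sum_(i < n) \sum_(j < n | (i < j)%N) (bk i)%:R * (bk j)%:R
  + 4%:R * \sum_(i < n) \sum_(j < n | (i < j)%N) \sum_(k < n | (j < k)%N) (bk i)%:R * (bk j)%:R * (bk k)%:R.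
Proof.
pose b m := oapp bk false (insub m).
have hb : forall i : 'I_n, b i = bk i by move=> i; rewrite /b valK.
have [_ _ h] := parity_all n b.
have -> : \sum_k (bk k : nat) = \sum_(k < n) (b k : nat) by apply: eq_bigr => k _; rewrite hb.
rewrite -h /P1 /P2 /P3.
congr (_ - _ * _ + _ * _).
- by apply: eq_bigr => k _; rewrite hb.
- by apply: eq_bigr => i _; apply: eq_bigr => j _; rewrite !hb.
- by apply: eq_bigr => i _; apply: eq_bigr => j _; apply: eq_bigr => k _; rewrite !hb.
Qed.

Lemma i_funE g (C y : H1 g) : i_fun C y = ind (iform C y). Proof. by []. Qed.
Lemma CbarE g q (C y : H1 g) : Cbar q C y = eps q C * ind (iform C y). Proof. by []. Qed.

Definition isC g q (e : 'I_(g + g) -> H1 g) (f : Map g) :=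
  exists a b c, forall y, f y = combo q e a b c y.

Lemma combo_scale g q (e : 'I_(g + g) -> H1 g) r a b c y :
  r * combo q e a b c y =
  combo q e (fun i => r * a i) (fun i j => r * b i j) (fun i j k => r * c i j k) y.
Proof.
rewrite /combo !mulrDr !mulr_sumr; congr (_ + _ + _).
- by apply: eq_bigr => i _; rewrite mulrA.
- apply: eq_bigr => i _; rewrite mulr_sumr; apply: eq_bigr => j _; by rewrite mulrA.
- apply: eq_bigr => i _; rewrite mulr_sumr; apply: eq_bigr => j _.
  rewrite mulr_sumr; apply: eq_bigr => k _; by rewrite mulrA.
Qed.

Lemma combo_add g q (e : 'I_(g + g) -> H1 g) a b c a' b' c' y :
  combo q e a b c y + combo q e a' b' c' y =
  combo q e (fun i => a i + a' i) (fun i j => b i j + b' i j)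
    (fun i j k => c i j k + c' i j k) y.
Proof.
rewrite /combo.
have e1 : \sum_i (a i + a' i) * gen1 q e i y =
   \sum_i a i * gen1 q e i y + \sum_i a' i * gen1 q e i y.
  by rewrite -big_split; apply: eq_bigr => i _; rewrite mulrDl.
have e2 : \sum_(i : 'I_(g + g)) \sum_(j : 'I_(g + g) | (i < j)%N) (b i j + b' i j) * gen2 q e i j y =
   \sum_(i : 'I_(g + g)) \sum_(j : 'I_(g + g) | (i < j)%N) b i j * gen2 q e i j y +
   \sum_(i : 'I_(g + g)) \sum_(j : 'I_(g + g) | (i < j)%N) b' i j * gen2 q e i j y.
  rewrite -big_split; apply: eq_bigr => i _.
  by rewrite -big_split; apply: eq_bigr => j _; rewrite mulrDl.
have e3 : \sum_(i : 'I_(g + g)) \sum_(j : 'I_(g + g) | (i < j)%N) \sum_(k : 'I_(g + g) | (j < k)%N)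
      (c i j k + c' i j k) * gen3 q e i j k y =
   \sum_(i : 'I_(g + g)) \sum_(j : 'I_(g + g) | (i < j)%N) \sum_(k : 'I_(g + g) | (j < k)%N) c i j k * gen3 q e i j k y +
   \sum_(i : 'I_(g + g)) \sum_(j : 'I_(g + g) | (i < j)%N) \sum_(k : 'I_(g + g) | (j < k)%N) c' i j k * gen3 q e i j k y.
  rewrite -big_split; apply: eq_bigr => i _.
  rewrite -big_split; apply: eq_bigr => j _.
  by rewrite -big_split; apply: eq_bigr => k _; rewrite mulrDl.
rewrite e1 e2 e3; ring.
Qed.

Lemma isC_scale g q (e : 'I_(g + g) -> H1 g) r f :
  isC q e f -> isC q e (fun y => r * f y).
Proof. by move=> [a [b [c h]]]; do 3 eexists; move=> y; rewrite h combo_scale. Qed.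

Lemma isC_add g q (e : 'I_(g + g) -> H1 g) f f' :
  isC q e f -> isC q e f' -> isC q e (fun y => f y + f' y).
Proof.
by move=> [a [b [c h]]] [a' [b' [c' h']]]; do 3 eexists; move=> y; rewrite h h' combo_add.
Qed.

Lemma isC0 g q (e : 'I_(g + g) -> H1 g) : isC q e (fun _ => 0).
Proof.
exists (fun _ => 0), (fun _ _ => 0), (fun _ _ _ => 0) => y.
rewrite /combo !big1 ?addr0 // => i _; rewrite ?mul0r // big1 // => j _;
  rewrite ?mul0r // big1 // => k _; by rewrite mul0r.
Qed.

Lemma isC_sum g q (e : 'I_(g + g) -> H1 g) I (r : seq I) (F : I -> Map g) :
  (forall i, isC q e (F i)) -> isC q e (fun y => \sum_(i <- r) F i y).
Proof.
move=> hF; elim: r => [|h r IH].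
  by have [a [b [c hc]]] := isC0 q e; exists a, b, c => y; rewrite big_nil (hc y).
have [a [b [c hc]]] := isC_add (hF h) IH.
by exists a, b, c => y; rewrite big_cons (hc y).
Qed.

Lemma indM (u v : 'F_2) : ind (u * v) = ind u * ind v.
Proof. by case: (F2_cases u) => ->; case: (F2_cases v) => ->; apply/val_inj. Qed.

Lemma bool_ind (u : 'F_2) : (((u == 1) : bool) : nat)%:R = ind u :> 'Z_8.
Proof. by rewrite /ind; case: (u == 1). Qed.

Lemma isC_i g q (e : 'I_(g + g) -> H1 g) : symplectic_basis e ->
  forall C, isC q e (i_fun C).
Proof.
move=> he C; have [s ->] := lin_surj he C.
pose sb k := ind (s 0 k).
exists (fun k => sb k * eps q (e k)),
  (fun i j => - (sb i * eps q (e i) * (sb j * eps q (e j)))),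
  (fun i j k => sb i * eps q (e i) * (sb j * eps q (e j)) * (sb k * eps q (e k))) => y.
rewrite i_funE /lin iform_suml.
under eq_bigr do rewrite iformZl.
rewrite ind_sum (parity_ord (fun k => s 0 k * iform (e k) y == 1)) /combo.
congr (_ + _ + _).
- apply: eq_bigr => k _; rewrite bool_ind indM /gen1 CbarE /eps /sb.
  by case: (q (e k) == 1); ring.
- rewrite -mulNr mulr_sumr; apply: eq_bigr => i _.
  rewrite mulr_sumr; apply: eq_bigr => j _.
  rewrite !bool_ind !indM /gen2 !CbarE /eps /sb.
  by case: (q (e i) == 1); case: (q (e j) == 1); ring.
- rewrite mulr_sumr; apply: eq_bigr => i _.
  rewrite mulr_sumr; apply: eq_bigr => j _.
  rewrite mulr_sumr; apply: eq_bigr => k _.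
  rewrite !bool_ind !indM /gen3 !CbarE /eps /sb.
  by case: (q (e i) == 1); case: (q (e j) == 1); case: (q (e k) == 1); ring.
Qed.

Lemma isC_Cbar g q (e : 'I_(g + g) -> H1 g) : symplectic_basis e ->
  forall C, isC q e (Cbar q C).
Proof.
move=> he C; have [a [b [c h]]] := isC_scale (eps q C) (isC_i q he C).
by exists a, b, c => y; rewrite CbarE -i_funE h.
Qed.

Lemma span_isC g q (e : 'I_(g + g) -> H1 g) : symplectic_basis e ->
  forall f, span_Cbar q f -> isC q e f.
Proof.
move=> he f [a ha].
have [a' [b' [c' h]]] := isC_sum (index_enum (H1 g))
   (fun C => isC_scale (a C) (isC_Cbar q he C)).
by exists a', b', c' => y; rewrite ha -h.
Qed.

Lemma span_ext g q (f f' : Map g) : (forall y, f y = f' y) -> span_Cbar q f' -> span_Cbar q f.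
Proof. by move=> h [a ha]; exists a => y; rewrite h ha. Qed.

Lemma span_add g q (f f' : Map g) : span_Cbar q f -> span_Cbar q f' ->
  span_Cbar q (fun y => f y + f' y).
Proof.
move=> [a ha] [a' ha']; exists (fun C => a C + a' C) => y.
by rewrite ha ha' -big_split; apply: eq_bigr => C _; rewrite mulrDl.
Qed.

Lemma span_scale g q r (f : Map g) : span_Cbar q f -> span_Cbar q (fun y => r * f y).
Proof.
move=> [a ha]; exists (fun C => r * a C) => y.
by rewrite ha mulr_sumr; apply: eq_bigr => C _; rewrite mulrA.
Qed.

Lemma span0 g q : span_Cbar q (fun _ : H1 g => 0).
Proof. by exists (fun _ => 0) => y; rewrite big1 // => C _; rewrite mul0r. Qed.

Lemma span_sum g q I (r : seq I) (P : pred I) (F : I -> Map g) :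
  (forall i, P i -> span_Cbar q (F i)) ->
  span_Cbar q (fun y => \sum_(i <- r | P i) F i y).
Proof.
move=> hF; elim: r => [|h r IH].
  by apply: span_ext (span0 q) => y; rewrite big_nil.
case hP: (P h).
  by apply: span_ext (span_add (hF h hP) IH) => y; rewrite big_cons hP.
by apply: span_ext IH => y; rewrite big_cons hP.
Qed.

Lemma span_Cbar1 g q (C : H1 g) : span_Cbar q (Cbar q C).
Proof.
exists (fun D => (D == C)%:R) => y.
rewrite (bigD1 C) //= eqxx mul1r big1 ?addr0 // => D /negbTE ->.
by rewrite mul0r.
Qed.

Lemma span_i g q (C : H1 g) : span_Cbar q (i_fun C).
Proof.
apply: span_ext (span_scale (eps q C) (span_Cbar1 q C)) => y.
by rewrite CbarE mulrA eps2 mul1r.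
Qed.

Lemma isC_span g q (e : 'I_(g + g) -> H1 g) f : isC q e f -> span_Cbar q f.
Proof.
move=> [a [b [c h]]]; apply: (@span_ext _ _ f (combo q e a b c) h).
rewrite /combo; apply: span_add; first apply: span_add.
- apply: span_sum => i _; apply: span_scale; exact: span_Cbar1.
- apply: span_sum => i _; apply: span_sum => j _; apply: span_scale.
  apply: span_ext (span_scale (eps q (e i) * eps q (e j))
     (span_add (span_add (span_i q (e i)) (span_i q (e j)))
        (span_scale (-1) (span_i q (e i + e j))))) => y.
  rewrite /gen2 !CbarE !i_funE iformDl ind_add2 /eps.
  by case: (q (e i) == 1); case: (q (e j) == 1); ring.
- apply: span_sum => i _; apply: span_sum => j _; apply: span_sum => k _.
  apply: span_scale.
  apply: span_ext (span_scale (eps q (e i) * eps q (e j) * eps q (e k))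
     (span_add (span_add (span_add (span_add (span_add (span_add
        (span_i q (e i + e j + e k)) (span_i q (e i))) (span_i q (e j)))
        (span_i q (e k)))
        (span_scale (-1) (span_i q (e i + e j))))
        (span_scale (-1) (span_i q (e i + e k))))
        (span_scale (-1) (span_i q (e j + e k))))) => y.
  rewrite /gen3 !CbarE !i_funE !iformDl ind_add3 !ind_add2 /eps.
  by case: (q (e i) == 1); case: (q (e j) == 1); case: (q (e k) == 1); ring.
Qed.

Definition S123 n (A : 'I_n -> 'Z_8) (B : 'I_n -> 'I_n -> 'Z_8)
  (C : 'I_n -> 'I_n -> 'I_n -> 'Z_8) (X : 'I_n -> 'Z_8) :=
  \sum_(i < n) A i * X i
  + \sum_(i < n) \sum_(j < n | (i < j)%N) B i j * (X i * X j)
  + \sum_(i < n) \sum_(j < n | (i < j)%N) \sum_(k < n | (j < k)%N)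
       C i j k * (X i * X j * X k).

Lemma bM (b1 b2 : bool) : (b1%:R * b2%:R : 'Z_8) = (b1 && b2)%:R.
Proof. by case: b1; case: b2; rewrite ?mul1r ?mul0r. Qed.

Lemma sum1_single n (F : 'I_n -> 'Z_8) i :
  (forall k, k != i -> F k = 0) -> \sum_k F k = F i.
Proof. by move=> h; rewrite (bigD1 i) //= big1 ?addr0. Qed.

Lemma sum2_zero n (F : 'I_n -> 'I_n -> 'Z_8) :
  (forall i j : 'I_n, (i < j)%N -> F i j = 0) ->
  \sum_(i < n) \sum_(j < n | (i < j)%N) F i j = 0.
Proof. by move=> h; rewrite big1 // => i _; rewrite big1 // => j; apply: h. Qed.

Lemma sum3_zero n (F : 'I_n -> 'I_n -> 'I_n -> 'Z_8) :
  (forall i j k : 'I_n, (i < j)%N -> (j < k)%N -> F i j k = 0) ->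
  \sum_(i < n) \sum_(j < n | (i < j)%N) \sum_(k < n | (j < k)%N) F i j k = 0.
Proof.
move=> h; rewrite big1 // => i _; rewrite big1 // => j hij; rewrite big1 // => k.
exact: h.
Qed.

Lemma sum2_single n (F : 'I_n -> 'I_n -> 'Z_8) (i j : 'I_n) : (i < j)%N ->
  (forall k l : 'I_n, (k < l)%N -> (k != i) || (l != j) -> F k l = 0) ->
  \sum_(k < n) \sum_(l < n | (k < l)%N) F k l = F i j.
Proof.
move=> hij hF.
rewrite (bigD1 i) //= [X in _ + X]big1 ?addr0; last first.
  by move=> k hk; apply: big1 => l hl; apply: hF => //; rewrite hk.
rewrite (bigD1 j hij) /= big1 ?addr0 // => l /andP[hl hlj].
by apply: hF => //; rewrite hlj orbT.
Qed.

Lemma sum3_single n (F : 'I_n -> 'I_n -> 'I_n -> 'Z_8) (i j k : 'I_n) : (i < j)%N -> (j < k)%N ->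
  (forall a b c : 'I_n, (a < b)%N -> (b < c)%N -> [|| a != i, b != j | c != k] -> F a b c = 0) ->
  \sum_(a < n) \sum_(b < n | (a < b)%N) \sum_(c < n | (b < c)%N) F a b c = F i j k.
Proof.
move=> hij hjk hF.
rewrite (bigD1 i) //= [X in _ + X]big1 ?addr0; last first.
  move=> a ha; apply: big1 => b hb; apply: big1 => c hc; apply: hF => //.
  by rewrite ha.
rewrite (bigD1 j hij) /= [X in _ + X]big1 ?addr0; last first.
  move=> b /andP[hb hbj]; apply: big1 => c hc; apply: hF => //.
  by rewrite hbj orbT.
rewrite (bigD1 k hjk) /= big1 ?addr0 // => c /andP[hc hck].
by apply: hF => //; rewrite hck !orbT.
Qed.

Lemma DS n (A : 'I_n -> 'Z_8) (B : 'I_n -> 'I_n -> 'Z_8) (C : 'I_n -> 'I_n -> 'I_n -> 'Z_8) :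
  (forall tb : 'I_n -> bool, S123 A B C (fun k => (tb k)%:R) = 0) ->
  [/\ forall i : 'I_n, A i = 0,
      forall i j : 'I_n, (i < j)%N -> B i j = 0 &
      forall i j k : 'I_n, (i < j)%N -> (j < k)%N -> C i j k = 0].
Proof.
move=> H.
have hA : forall i : 'I_n, A i = 0.
  move=> i; have := H (fun k => k == i); rewrite /S123.
  rewrite (@sum1_single _ _ i); last by move=> k /negbTE ->; rewrite mulr0.
  rewrite eqxx mulr1 sum2_zero ?sum3_zero ?addr0 //.
  - move=> a b c hab hbc; rewrite !bM.
    suff -> : ((a == i) && (b == i)) && (c == i) = false by rewrite mulr0.
    apply/negbTE; move: hab hbc; rewrite -!val_eqE /=.
    move: (val a) (val b) (val c) (val i) => a' b' c' i'; lia.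
  - move=> a b hab; rewrite !bM.
    suff -> : (a == i) && (b == i) = false by rewrite mulr0.
    apply/negbTE; move: hab; rewrite -!val_eqE /=.
    move: (val a) (val b) (val i) => a' b' i'; lia.
have hB : forall i j : 'I_n, (i < j)%N -> B i j = 0.
  move=> i j hij; have := H (fun k => (k == i) || (k == j)); rewrite /S123.
  rewrite big1 ?add0r; last by move=> k _; rewrite hA mul0r.
  rewrite (sum2_single hij); last first.
    move=> a b hab hne; rewrite !bM.
    suff -> : ((a == i) || (a == j)) && ((b == i) || (b == j)) = false by rewrite mulr0.
    apply/negbTE; move: hab hij hne; rewrite -!val_eqE /=.
    move: (val a) (val b) (val i) (val j) => a' b' i' j'; lia.
  rewrite !eqxx orbT /= mulr1 sum3_zero ?addr0 ?mulr1 //.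
  move=> a b c hab hbc; rewrite !bM.
  suff -> : (((a == i) || (a == j)) && ((b == i) || (b == j))) && ((c == i) || (c == j)) = false.
    by rewrite mulr0.
  apply/negbTE; move: hab hbc hij; rewrite -!val_eqE /=.
  move: (val a) (val b) (val c) (val i) (val j) => a' b' c' i' j'; lia.
split=> // i j k hij hjk.
have := H (fun m => [|| m == i, m == j | m == k]); rewrite /S123.
rewrite big1 ?add0r; last by move=> m _; rewrite hA mul0r.
rewrite sum2_zero ?add0r; last by move=> a b hab; rewrite hB // mul0r.
rewrite (sum3_single hij hjk); last first.
  move=> a b c hab hbc hne; rewrite !bM.
  suff -> : ([|| a == i, a == j | a == k] && [|| b == i, b == j | b == k])
     && [|| c == i, c == j | c == k] = false by rewrite mulr0.
  apply/negbTE; move: hab hbc hij hjk hne; rewrite -!val_eqE /=.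
  move: (val a) (val b) (val c) (val i) (val j) (val k) => a' b' c' i' j' k'; lia.
by rewrite !eqxx !orbT /= !mulr1.
Qed.

Lemma pat_ifun g (e : 'I_(g + g) -> H1 g) : symplectic_basis e ->
  forall tb : 'I_(g + g) -> bool, exists y, forall k, i_fun (e k) y = (tb k)%:R.
Proof.
move=> he tb; have [y hy] := pattern he (fun k => (tb k)%:R).
by exists y => k; rewrite i_funE hy ind_nat oddb.
Qed.

Lemma combo_S123 g q (e : 'I_(g + g) -> H1 g) a b c y (X : 'I_(g + g) -> 'Z_8) :
  (forall k, X k = i_fun (e k) y) ->
  combo q e a b c y =
  S123 (fun i => a i * eps q (e i)) (fun i j => b i j * 2%:R * (eps q (e i) * eps q (e j)))
    (fun i j k => c i j k * 4%:R * (eps q (e i) * eps q (e j) * eps q (e k))) X.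
Proof.
move=> hX; rewrite /combo /S123; congr (_ + _ + _).
- by apply: eq_bigr => i _; rewrite hX /gen1 CbarE -i_funE; ring.
- apply: eq_bigr => i _; apply: eq_bigr => j _.
  by rewrite !hX /gen2 !CbarE -!i_funE; ring.
- apply: eq_bigr => i _; apply: eq_bigr => j _; apply: eq_bigr => k _.
  by rewrite !hX /gen3 !CbarE -!i_funE; ring.
Qed.

Lemma Z8_nat_eq0 n : (n%:R : 'Z_8) = 0 -> (8 %| n)%N.
Proof. by move/(congr1 val); rewrite Zp_nat /= => h; apply/eqP. Qed.

Lemma Z8_mul8 (x : 'Z_8) : x *+ 8 = 0.
Proof. by rewrite -mulr_natr Z8_8 mulr0. Qed.

Unset Implicit Arguments.
Set Strict Implicit.

Theorem mainTheorem11 (g : nat) (hg : (2 <= g)%N) (q : H1 g -> 'F_2)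
  (e : 'I_(g + g) -> H1 g) :
  quad_form q -> symplectic_basis e ->
  (forall f : Map g, span_Cbar q f <->
     exists a b c, forall y, f y = combo q e a b c y) /\
  (forall a b c, (forall y, combo q e a b c y = 0) ->
     (forall (i : 'I_(g + g)) y, a i * gen1 q e i y = 0) /\
     (forall i j : 'I_(g + g), (i < j)%N -> forall y, b i j * gen2 q e i j y = 0) /\
     (forall i j k : 'I_(g + g), (i < j)%N -> (j < k)%N -> forall y, c i j k * gen3 q e i j k y = 0)) /\
  (forall i : 'I_(g + g), has_order (gen1 q e i) 8) /\
  (forall i j : 'I_(g + g), (i < j)%N -> has_order (gen2 q e i j) 4) /\
  (forall i j k : 'I_(g + g), (i < j)%N -> (j < k)%N -> has_order (gen3 q e i j k) 2).
Proof.
move=> _ he.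
have [y1 hy1] := pat_ifun he (fun _ => true).
split.
  move=> f; split; first exact: span_isC he f.
  by move=> h; apply: (@isC_span _ q e).
split.
  move=> a b c H.
  have hDS : forall tb : 'I_(g + g) -> bool, S123 (fun i => a i * eps q (e i))
    (fun i j => b i j * 2%:R * (eps q (e i) * eps q (e j)))
    (fun i j k => c i j k * 4%:R * (eps q (e i) * eps q (e j) * eps q (e k)))
    (fun k => (tb k)%:R) = 0.
    move=> tb; have [y hy] := pat_ifun he tb.
    by rewrite -(H y) (combo_S123 _ _ _ _ (fun k => esym (hy k))).
  have [hA hB hC] := DS hDS.
  split; first by move=> i y; rewrite /gen1 CbarE mulrA hA mul0r.
  split.
    move=> i j hij y; have := hB i j hij => /= h0.
    have -> : b i j * gen2 q e i j y = b i j * 2%:R * (eps q (e i) * eps q (e j))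
       * (i_fun (e i) y * i_fun (e j) y) by rewrite /gen2 !CbarE -!i_funE; ring.
    by rewrite h0 mul0r.
  move=> i j k hij hjk y; have := hC i j k hij hjk => /= h0.
  have -> : c i j k * gen3 q e i j k y =
     c i j k * 4%:R * (eps q (e i) * eps q (e j) * eps q (e k))
       * (i_fun (e i) y * i_fun (e j) y * i_fun (e k) y) by rewrite /gen3 !CbarE -!i_funE; ring.
  by rewrite h0 mul0r.
split.
  move=> i n; split.
    move=> h; apply: Z8_nat_eq0.
    have := h y1; rewrite /gen1 CbarE -i_funE hy1 mulr1 => h1.
    by rewrite -[n%:R]mulr1n -(eps2 q (e i)) -mulrnAr h1 mulr0.
  by move=> /dvdnP [m ->] y; rewrite mulrnA Z8_mul8.
split.
  move=> i j hij n; split.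
    move=> h.
    have h2 : ((2 * n)%:R : 'Z_8) = 0.
      have := h y1; rewrite /gen2 !CbarE -!i_funE !hy1 !mulr1 => h1.
      set s := eps q (e i) * eps q (e j).
      have hs : s * s = 1.
        have -> : s * s = (eps q (e i) * eps q (e i)) * (eps q (e j) * eps q (e j))
           by rewrite /s; ring.
        by rewrite !eps2 !mulr1.
      have -> : ((2 * n)%:R : 'Z_8) = s * (2%:R * s *+ n).
        have -> : s * (2%:R * s *+ n) = (2%:R * (s * s)) *+ n.
          by rewrite mulrnAr; congr (_ *+ _); ring.
        by rewrite hs mulr1 natrM mulr_natr.
      by rewrite h1 mulr0.
    by rewrite -(dvdn_pmul2l (isT : (0 < 2)%N)); apply: Z8_nat_eq0.
  move=> /dvdnP [m ->] y; rewrite mulnC mulrnA.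
  have -> : gen2 q e i j y *+ 4 = (8%:R : 'Z_8) * (Cbar q (e i) y * Cbar q (e j) y).
    by rewrite -[gen2 q e i j y *+ 4]mulr_natr /gen2; ring.
  by rewrite Z8_8 mul0r mul0rn.
move=> i j k hij hjk n; split.
  move=> h.
  have h2 : ((4 * n)%:R : 'Z_8) = 0.
    have := h y1; rewrite /gen3 !CbarE -!i_funE !hy1 !mulr1 => h1.
    set s := eps q (e i) * eps q (e j) * eps q (e k).
    have hs : s * s = 1.
      have -> : s * s = (eps q (e i) * eps q (e i)) * (eps q (e j) * eps q (e j))
         * (eps q (e k) * eps q (e k)) by rewrite /s; ring.
      by rewrite !eps2 !mulr1.
    have -> : ((4 * n)%:R : 'Z_8) = s * (4%:R * s *+ n).
      have -> : s * (4%:R * s *+ n) = (4%:R * (s * s)) *+ n.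
        by rewrite mulrnAr; congr (_ *+ _); ring.
      by rewrite hs mulr1 natrM mulr_natr.
    by rewrite h1 mulr0.
  by rewrite -(dvdn_pmul2l (isT : (0 < 4)%N)); apply: Z8_nat_eq0.
move=> /dvdnP [m ->] y; rewrite mulnC mulrnA.
have -> : gen3 q e i j k y *+ 2 =
   (8%:R : 'Z_8) * (Cbar q (e i) y * Cbar q (e j) y * Cbar q (e k) y).
  by rewrite -[gen3 q e i j k y *+ 2]mulr_natr /gen3; ring.
by rewrite Z8_8 mul0r mul0rn.
Qed.
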